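(* In the standard LLP setup, for all $N,M\ge1$: $L(G,\gamma^M_{cons})\subseteq L(G,\gamma^N_{optm})$.
   Context: Standard LLP setup. $\Sigma=\Sigma_c\,\dot\cup\,\Sigma_{uc}$ is a finite alphabet partitioned into controllable and uncontrollable events. The plant $G$ has generated language $L(G)$ and marked language $L_m(G)$ with $L(G)=\overline{L_m(G)}$ ($\overline{M}$ = set of prefixes of strings in $M$). The legal language $K\subseteq L_m(G)$ satisfies $K=\overline{K}\cap L_m(G)$. For a prefix-closed $L$, $M$ is controllable w.r.t. $L$ if $\overline{M}\Sigma_{uc}\cap L\subseteq\overline{M}$. For a language $L$ and $s\in\Sigma^*$: $L/s=\{t: st\in L\}$; $L|_N=\{t\in L:|t|\le N\}$; $\Sigma_{L(G)}(s)=\{\sigma\in\Sigma: s\sigma\in L(G)\}$. $M^{\uparrow/s|_N}$ is the supremal sublanguage of $M$ controllable w.r.t. $L(G)/s|_N$. Conservative attitude: $f^N_{cons}(s)=[K/s|_{N-1}]^{\uparrow/s|_N}$; optimistic attitude: $f^N_{optm}(s)=[K/s|_N\cup(\overline{K}/s|_N\setminus\overline{K}/s|_{N-1})]^{\uparrow/s|_N}$. For $a\in\{cons,optm\}$ the control policy is $\gamma^N_a(s)=(\overline{f^N_a(s)}\cap\Sigma)\cup(\Sigma_{uc}\cap\Sigma_{L(G)}(s))$. Closed-loop language $L(G,\gamma)$: $\epsilon\in L(G,\gamma)$, and $s\sigma\in L(G,\gamma)$ iff $s\in L(G,\gamma)$, $s\sigma\in L(G)$, $\sigma\in\gamma(s)$.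 *)

(* Defs.v *)
From mathcomp Require Import all_boot.
Set Implicit Arguments. Unset Strict Implicit. Unset Printing Implicit Defensive.

Section LLP.
Variable Sigma : finType.

Definition lang := seq Sigma -> Prop.

Definition pclos (M : lang) : lang := fun t => exists u, M (t ++ u).

Definition quot (L : lang) (s : seq Sigma) : lang := fun t => L (s ++ t).

Definition trunc (L : lang) (N : nat) : lang := fun t => L t /\ size t <= N.

Definition controllable (uc : pred Sigma) (M L : lang) : Prop :=
  forall t (e : Sigma), pclos M t -> uc e -> L (rcons t e) -> pclos M (rcons t e).

Definition supcon (uc : pred Sigma) (L M : lang) : lang :=
  fun t => exists M' : lang,
    [/\ (forall w, M' w -> M w), controllable uc M' L & M' t].

Definition f_cons (uc : pred Sigma) (LG K : lang) (N : nat) (s : seq Sigma) : lang :=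
  supcon uc (trunc (quot LG s) N) (trunc (quot K s) N.-1).

Definition f_optm (uc : pred Sigma) (LG K : lang) (N : nat) (s : seq Sigma) : lang :=
  supcon uc (trunc (quot LG s) N)
    (fun t => trunc (quot K s) N t \/
              (trunc (quot (pclos K) s) N t /\ ~ trunc (quot (pclos K) s) N.-1 t)).

Definition policy (uc : pred Sigma) (LG : lang) (f : seq Sigma -> lang)
  (s : seq Sigma) (e : Sigma) : Prop :=
  pclos (f s) [:: e] \/ (uc e /\ LG (rcons s e)).

Inductive closed_loop (LG : lang) (gam : seq Sigma -> Sigma -> Prop) : lang :=
| cl_nil : closed_loop LG gam [::]
| cl_rcons s e : closed_loop LG gam s -> LG (rcons s e) -> gam s e ->
                 closed_loop LG gam (rcons s e).

End LLP.

(* Main.v *)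
Require Import Defs.
From mathcomp Require Import all_boot.

Lemma pclos_take (Sigma : finType) (P : lang Sigma) (N : nat) (t u : seq Sigma) :
  P (t ++ u) -> size t <= N ->
  (size (t ++ u) <= N) \/
  (size (t ++ take (N - size t) u) = N /\ pclos P (t ++ take (N - size t) u)).
Proof.
move=> Htu Ht.
case: (leqP (size (t ++ u)) N) => H; [by left|right].
split.
  rewrite size_cat size_take; move: H; rewrite size_cat => H.
  case: ifP => H2. by rewrite subnKC.
  exfalso; move/negbT: H2; rewrite -leqNgt => H2.
  have : size t + size u <= N by rewrite -(subnKC Ht) leq_add2l.
  by rewrite leqNgt H.
exists (drop (N - size t) u); by rewrite -catA cat_take_drop.
Qed.

Lemma key (Sigma : finType) (uc : pred Sigma) (LG K : lang Sigma) (N M : nat)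
  (HN : 1 <= N) (HM : 1 <= M) s e :
  policy uc LG (f_cons uc LG K M) s e -> policy uc LG (f_optm uc LG K N) s e.
Proof.
case=> [[u [M' [Msub Mctrl Mu]]]|H]; last by right.
left.
pose M'' : lang Sigma := fun t => pclos M' t /\ size t <= N /\ (M' t \/ size t = N).
have pcl : forall t, pclos M' t -> size t <= N -> pclos M'' t.
  move=> t [v Hv] Ht.
  case: (@pclos_take _ M' N t v Hv Ht) => [H1|[H1 H2]].
    exists v; split; first by exists [::]; rewrite cats0.
    by split => //; left.
  exists (take (N - size t) v); split => //; rewrite H1; split => //; by right.
have : pclos M'' [:: e].
  apply: pcl; [by exists u|exact: HN].
case=> w Hw; exists w; exists M''; split => //.
- move=> t [[v Hv] [Hs [Ht|Ht]]]; first by left; have [] := Msub _ Ht; split.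
  right; split.
    split; last by rewrite Ht.
    have [Kt _] := Msub _ Hv; exists v; by rewrite /quot -catA.
  case=> _; rewrite Ht; case: (N) HN => // n _ /=; by rewrite ltnn.
- move=> t a [v [[y Hy] [Hs _]]] Hu [HL Ha].
  apply: pcl; last exact Ha.
  apply: Mctrl => //.
  + exists (v ++ y); by rewrite catA.
  + split => //.
    have [_ Hy1] := Msub _ Hy.
    rewrite size_rcons.
    have : size t <= size ((t ++ v) ++ y) by rewrite -catA size_cat leq_addr.
    move=> H2; have H3 := leq_trans H2 Hy1.
    by case: (M) HM H3.
Qed.

Theorem theorem8 (Sigma : finType) (uc : pred Sigma) (Lm K : lang Sigma)
  (HKsub : forall t, K t -> Lm t)
  (HKclosed : forall t, K t <-> (pclos K t /\ Lm t))
  (N M : nat) (HN : 1 <= N) (HM : 1 <= M) :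
  forall s : seq Sigma,
    closed_loop (pclos Lm) (policy uc (pclos Lm) (f_cons uc (pclos Lm) K M)) s ->
    closed_loop (pclos Lm) (policy uc (pclos Lm) (f_optm uc (pclos Lm) K N)) s.
Proof.
move=> s; elim=> [|t a _ IH HL Hp]; first exact: cl_nil.
apply: cl_rcons => //; exact: key Hp.
Qed.
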